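(* Let $1>\delta_1>\delta_2>0$. Consider the S6V model with any boundary data having no arrow incoming from $(1,0)$, and let $Q$ be the second class particle starting from $(1,0)$. Let $x>10$ be an integer and let $y_Q$ be the height at which $Q$ crosses the line $\{(i,j):i=x+\frac12\}$. Then there are constants $C,c>0$ such that for all $k\ge100x\delta_1$, $$\mathbb{P}[y_Q\le x-k]\le C\mathrm{e}^{-ck}.$$
   Context: S6V model: vertices $(i,j)\in\mathbb{Z}_{>0}^2$ with incoming edges from left and below, outgoing to right and up; boundary data specify which edges $(0,j)\to(1,j)$ and $(i,0)\to(i,1)$ carry an arrow (incoming from $(0,j)$, resp. $(i,0)$). Vertices sampled on antidiagonals: none in gives none out; two in gives both out; a single arrow from below exits up w.p. $\delta_1$, right w.p. $1-\delta_1$; a single arrow from the left exits right w.p. $\delta_2$, up w.p. $1-\delta_2$. Second class particle from $v_0$: with $\xi_0^+$ equal to the boundary data plus an arrow from $v_0$, run both models with shared Bernoulli decisions at each vertex (basic coupling); edges present in the $\xi_0^+$ model but not in the original model form one up-right path from $v_0$. *)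

(* Defs.v *)
From HB Require Import structures.
From mathcomp Require Import all_boot all_order all_algebra.
From mathcomp Require Import all_classical all_reals all_analysis.
Set Implicit Arguments. Unset Strict Implicit. Unset Printing Implicit Defensive.
Import Order.TTheory GRing.Theory Num.Theory.
Local Open Scope ring_scope.

(* Randomness at a vertex: a pair (b1, b2) of independent Bernoulli
   decisions, b1 ~ Ber(delta1) used when a single arrow enters from below
   (true = exit up), b2 ~ Ber(delta2) used when a single arrow enters from
   the left (true = exit right).  Both coupled models use the same pair
   (basic coupling). *)

(* Vertex rule: inputs (from left, from below), decisions (b1,b2);
   output (to the right, up). *)
Definition s6v_step (aleft abelow b1 b2 : bool) : bool * bool :=
  match aleft, abelow with
  | false, false => (false, false)
  | true, true => (true, true)
  | false, true => if b1 then (false, true) else (true, false)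
  | true, false => if b2 then (true, false) else (false, true)
  end.

(* Outputs of the vertices (i, j) of row j, given the arrows entering the
   row from below ([below i] = arrow on edge (i,j-1)->(i,j)), the left
   boundary [bL] ([bL j] = arrow on edge (0,j)->(1,j)) and the decisions
   [om i j].  [row_out .. 0] has first component [bL j] (the "right output"
   of the fictitious vertex (0,j)). *)
Fixpoint row_out (bL : nat -> bool) (below : nat -> bool) (j : nat)
  (om : nat -> nat -> bool * bool) (i : nat) : bool * bool :=
  match i with
  | 0 => (bL j, false)
  | i'.+1 =>
      let left := (row_out bL below j om i').1 in
      s6v_step left (below i) (om i j).1 (om i j).2
  end.

(* [s6v bL bB om j i] = (arrow on edge (i,j)->(i+1,j), arrow on edge
   (i,j)->(i,j+1)) for i, j >= 1.  Row 0 encodes the bottom boundary: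
   [(s6v bL bB om 0 i).2 = bB i] = arrow on edge (i,0)->(i,1). *)
Fixpoint s6v (bL bB : nat -> bool) (om : nat -> nat -> bool * bool)
  (j : nat) : nat -> bool * bool :=
  match j with
  | 0 => fun i => (false, bB i)
  | j'.+1 => row_out bL (fun i => (s6v bL bB om j' i).2) j om
  end.

Definition add_v10 (bB : nat -> bool) : nat -> bool :=
  fun i => if i == 1%N then true else bB i.

(* The second class particle Q from (1,0) crosses the line i = x + 1/2 at
   height y: the edge (x,y)->(x+1,y) is present in the xi_0^+ model but
   not in the original one. *)
Definition Q_crosses_at (bL bB : nat -> bool) (om : nat -> nat -> bool * bool)
  (x y : nat) : bool :=
  (s6v bL (add_v10 bB) om y x).1 && ~~ (s6v bL bB om y x).1.

(* Event {y_Q <= m} (y_Q = +oo if Q never crosses, then the event fails). *)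
Definition yQ_le (bL bB : nat -> bool) (om : nat -> nat -> bool * bool)
  (x m : nat) : bool :=
  [exists y : 'I_m, Q_crosses_at bL bB om x y.+1].

Definition ext_om (X M : nat) (f : {ffun 'I_X * 'I_M -> bool * bool})
  (i j : nat) : bool * bool :=
  match (insub i.-1 : option 'I_X), (insub j.-1 : option 'I_M) with
  | Some a, Some b => if (0 < i)%N && (0 < j)%N then f (a, b) else (false, false)
  | _, _ => (false, false)
  end.

Definition box_weight (R : realType) (d1 d2 : R) (X M : nat)
  (f : {ffun 'I_X * 'I_M -> bool * bool}) : R :=
  \prod_(v : 'I_X * 'I_M)
     ((if (f v).1 then d1 else 1 - d1) * (if (f v).2 then d2 else 1 - d2)).

Definition box_prob (R : realType) (d1 d2 : R) (X M : nat)
  (E : (nat -> nat -> bool * bool) -> bool) : R :=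
  \sum_(f : {ffun 'I_X * 'I_M -> bool * bool} | E (ext_om f))
     box_weight d1 d2 f.

(* P[y_Q <= m] for the crossing of the line i = x + 1/2: the event only
   depends on vertices (i,j) with i <= x, j <= m. *)
Definition prob_yQ_le (R : realType) (d1 d2 : R) (bL bB : nat -> bool)
  (x m : nat) : R :=
  box_prob d1 d2 x m (fun om => yQ_le bL bB om x m).

(* Main.v *)
Require Import Defs.
From mathcomp Require Import all_boot all_order all_algebra.
From mathcomp Require Import all_classical all_reals all_analysis.
From mathcomp Require Import zify ring lra.
Import Order.TTheory GRing.Theory Num.Theory.

Fixpoint walk (s : nat -> bool) (t : nat) : nat * nat * bool :=
  match t with
  | 0 => (1, 1, true)
  | t'.+1 => let '(i, j, b) := walk s t' in
             if b == s t' then (i, j.+1, true) else (i.+1, j, false)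
  end.

Lemma walk_sum s t : let '(i, j, b) := walk s t in (i + j = t.+2)%N.
Proof.
elim: t => [|t IH] //=; case: (walk s t) IH => [[i j] b] h.
by case: (b == s t) => /=; lia.
Qed.

Lemma walk_ext s1 s2 t : (forall u, (u < t)%N -> s1 u = s2 u) -> walk s1 t = walk s2 t.
Proof.
elim: t => [|t IH] //= h; rewrite IH; last by move=> u hu; apply: h; lia.
by rewrite h.
Qed.

Lemma walk_count s t : let '(i, j, b) := walk s t in
  (i <= (\sum_(u < t) s u) + j + (if b then 0 else 1))%N.
Proof.
elim: t => [|t IH]; first by rewrite /= big_ord0. rewrite big_ord_recr /=.
case: (walk s t) IH => [[i j] b] h.
by move: h; case: b; case: (s t) => /= h; lia.
Qed.

Section Det.
Variables (bL bB : nat -> bool) (om : nat -> nat -> bool * bool).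
Hypothesis hbB : bB 1%N = false.

Definition oO i j := s6v bL bB om j i.
Definition oP i j := s6v bL (add_v10 bB) om j i.

Lemma o_rec (b : nat -> bool) i j :
  s6v bL b om j.+1 i.+1 =
  s6v_step (s6v bL b om j.+1 i).1 (s6v bL b om j i.+1).2 (om i.+1 j.+1).1 (om i.+1 j.+1).2.
Proof. by []. Qed.

Lemma o_left (b : nat -> bool) j : s6v bL b om j.+1 0 = (bL j.+1, false).
Proof. by []. Qed.

Lemma o_bot (b : nat -> bool) i : s6v bL b om 0 i = (false, b i).
Proof. by []. Qed.

Lemma oO_rec i j : oO i.+1 j.+1 =
  s6v_step (oO i j.+1).1 (oO i.+1 j).2 (om i.+1 j.+1).1 (om i.+1 j.+1).2.
Proof. by []. Qed.
Lemma oP_rec i j : oP i.+1 j.+1 =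
  s6v_step (oP i j.+1).1 (oP i.+1 j).2 (om i.+1 j.+1).1 (om i.+1 j.+1).2.
Proof. by []. Qed.

Definition dU i j := (oP i j).2 && ~~ (oO i j).2.
Arguments dU : simpl never.

Fixpoint aw (t : nat) : nat * nat * bool :=
  match t with
  | 0 => (1, 1, true)
  | t'.+1 => let '(i, j, b) := aw t' in
             if dU i j then (i, j.+1, true) else (i.+1, j, false)
  end.

Lemma aw_pos t : let '(i, j, b) := aw t in [/\ 0 < i, 0 < j & i + j = t.+2]%N.
Proof.
elim: t => [|t IH] //=; case: (aw t) IH => [[i j] b] [hi hj hs].
by case: (dU i j); split => //; lia.
Qed.

Definition Cinv (n : nat) : Prop :=
  let '(i0, j0, b0) := aw n.-1 in
  forall i j, (i + j = n)%N ->
   [/\ (oO i j).1 ==> (oP i j).1, (oO i j).2 ==> (oP i j).2,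
       ((oP i j).1 != (oO i j).1) = [&& ~~ b0, i == i0.-1 & j == j0] &
       ((oP i j).2 != (oO i j).2) = [&& b0, i == i0 & j == j0.-1]].

Lemma step_below a c1 c2 :
  let O := s6v_step a false c1 c2 in let P := s6v_step a true c1 c2 in
  [/\ O.1 ==> P.1, O.2 ==> P.2, (P.1 != O.1) = ~~ (P.2 && ~~ O.2),
      (P.2 != O.2) = (P.2 && ~~ O.2) & (P.2 && ~~ O.2) -> c1 || c2].
Proof. by case: a; case: c1; case: c2. Qed.

Lemma step_left a c1 c2 :
  let O := s6v_step false a c1 c2 in let P := s6v_step true a c1 c2 in
  [/\ O.1 ==> P.1, O.2 ==> P.2, (P.1 != O.1) = ~~ (P.2 && ~~ O.2),
      (P.2 != O.2) = (P.2 && ~~ O.2) & ~~ (P.2 && ~~ O.2) -> c1 || c2].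
Proof. by case: a; case: c1; case: c2. Qed.


Lemma local (lo lp bo bp : bool*bool) c1 c2 (e : bool) b0 :
 lo.1 ==> lp.1 -> bo.2 ==> bp.2 -> (lp.1 != lo.1) = ~~b0 && e -> (bp.2 != bo.2) = b0 && e ->
 let O := s6v_step lo.1 bo.2 c1 c2 in let P := s6v_step lp.1 bp.2 c1 c2 in
 [/\ O.1 ==> P.1, O.2 ==> P.2, (P.1 != O.1) = e && ~~(P.2 && ~~O.2),
     (P.2 != O.2) = e && (P.2 && ~~ O.2)
   & e -> (b0 == (P.2 && ~~O.2)) -> c1 || c2 ].
Proof.
case: lo lp bo bp => [lo1 lo2] [lp1 lp2] [bo1 bo2] [bp1 bp2] /=.
by case: lo1; case: lp1; case: bo2; case: bp2; case: c1; case: c2; case: e; case: b0.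
Qed.

Lemma Cinv1 : Cinv 1.
Proof.
move=> i j; case: i => [|[|i]] hij.
- have -> : j = 1%N by lia.
  by rewrite /oO /oP /= implybb eqxx; split.
- have -> : j = 0%N by lia.
  by rewrite /oO /oP /= /add_v10 /= hbB; split.
- lia.
Qed.

Lemma CinvS n : (0 < n)%N -> Cinv n -> Cinv n.+1.
Proof.
move=> n0; rewrite /Cinv.
have := aw_pos n.-1.
have -> : aw n.+1.-1 = (let '(i, j, b) := aw n.-1 in
             if dU i j then (i, j.+1, true) else (i.+1, j, false)).
  by case: n n0 => // n _ /=.
case: (aw n.-1) => [[i0 j0] b0] [hi0 hj0 hs0] IH.
case hd: (dU i0 j0) => i j hij;
 (case: i hij => [|i] hij; [
  rewrite /oO /oP; case: j hij => [|j] hij; first lia; rewrite !o_left /= ?implybb ?andbF;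
     split => //; rewrite ?eqxx; apply/esym/negbTE; lia
 | case: j hij => [|j] hij; [
     rewrite /oO /oP !o_bot /= /add_v10 /= ?implybb;
     (have -> : (i.+1 == 1)%N = false by apply/negbTE; lia);
     rewrite ?implybb ?andbF ?eqxx; split => //; apply/esym/negbTE; lia | ]]).
all: have [L1 L2 L3 L4] := IH i j.+1 ltac:(lia).
all: have [B1 B2 B3 B4] := IH i.+1 j ltac:(lia).
all: have E1 : (i == i0.-1) = (i.+1 == i0) by case: (i0) hi0.
all: have E2 : (j == j0.-1) = (j.+1 == j0) by case: (j0) hj0.
all: rewrite E1 in L3; rewrite E2 in B4.
all: have := @local _ _ _ _ (om i.+1 j.+1).1 (om i.+1 j.+1).2 _ _ L1 B2 L3 B4.
all: rewrite -oO_rec -oP_rec -/(dU _ _) => -[H1 H2 H3 H4 _].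
all: split => //; rewrite ?H3 ?H4.
all: have [[ei ej]|ne] : ((i.+1 = i0) /\ (j.+1 = j0)) \/ (((i.+1 == i0) && (j.+1 == j0)) = false)
  by case: eqP; case: eqP => //= *; [left | right..].
all: move: hd; rewrite /dU => hd.
all: try by subst i0 j0; rewrite !eqxx hd /= ?eqxx.
all: by rewrite /= ne.
Qed.

Lemma Cinv_all n : (0 < n)%N -> Cinv n.
Proof.
elim: n => [|n IH] // _; case: n IH => [|n] IH; first exact: Cinv1.
by apply: CinvS => //; apply: IH.
Qed.

Definition stay t := let '(i, j, b) := aw t in b == dU i j.

Lemma aw_walk t : aw t = walk stay t.
Proof.
elim: t => [|t IH] //=; rewrite -IH /stay.
by case: (aw t) => [[i j] b]; case: b; case: (dU i j).
Qed.

Lemma stay_bit t : stay t -> let '(i, j, b) := aw t in (om i j).1 || (om i j).2.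
Proof.
have := aw_pos t; have := @Cinv_all t.+1 isT; rewrite /Cinv /= /stay.
case: (aw t) => [[i0 j0] b0] C [hi0 hj0 hs].
case: i0 hi0 C hs => [|i] // _; case: j0 hj0 => [|j] // _ C hs st.
have [L1 L2 L3 L4] := C i j.+1 ltac:(lia).
have [B1 B2 B3 B4] := C i.+1 j ltac:(lia).
have L3' : ((oP i j.+1).1 != (oO i j.+1).1) = ~~ b0 && true by rewrite L3 /= !eqxx andbT.
have B4' : ((oP i.+1 j).2 != (oO i.+1 j).2) = b0 && true by rewrite B4 /= !eqxx andbT.
have := @local _ _ _ _ (om i.+1 j.+1).1 (om i.+1 j.+1).2 true b0 L1 B2 L3' B4'.
move=> [_ _ _ _]; apply => //.
Qed.

Definition dR i j := (oP i j).1 && ~~ (oO i j).1.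

Lemma crossing x y : (0 < x)%N -> (0 < y)%N -> dR x y -> aw (x + y).-1 = (x.+1, y, false).
Proof.
move=> hx hy; have := aw_pos (x + y).-1; have := @Cinv_all (x + y) ltac:(lia).
rewrite /Cinv /dR; case: (aw (x + y).-1) => [[i1 j1] b1] C [hi1 hj1 hs].
have [L1 _ L3 _] := C x y erefl.
move=> hd; move: L3; rewrite (_ : (oP x y).1 != (oO x y).1) //; last first.
  by move: hd L1; case: (oP x y).1; case: (oO x y).1.
clear C; case: b1 => //= /esym /andP [/eqP -> /eqP ->].
by case: i1 hi1 hs.
Qed.

End Det.


Definition sext N (s : {ffun 'I_N -> bool}) (n : nat) : bool :=
  [exists t : 'I_N, (val t == n) && s t].

Arguments sext {N}.
Lemma sextE N (s : {ffun 'I_N -> bool}) (t : 'I_N) : sext s t = s t.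
Proof.
apply/existsP/idP => [[t' /andP [/eqP e st']]|st]; last by exists t; rewrite eqxx.
by have -> : t = t' by apply: val_inj.
Qed.

Lemma card_sum N (s : {ffun 'I_N -> bool}) : #|[set t | s t]| = \sum_(t < N) s t.
Proof.
rewrite -sum1_card big_mkcond /=; apply: eq_bigr => t _; by rewrite inE; case: (s t).
Qed.

Definition Gpos N (s : {ffun 'I_N -> bool}) (t : 'I_N) : nat * nat :=
  let '(i, j, b) := walk (sext s) t in (i, j).

Arguments Gpos {N}.
Lemma Gpos_inj N s (t1 t2 : 'I_N) : Gpos s t1 = Gpos s t2 -> t1 = t2.
Proof.
move=> E; have h1 := walk_sum (sext s) t1; have h2 := walk_sum (sext s) t2.
rewrite /Gpos in E.
destruct (walk (sext s) t1) as [[i1 j1] b1]; destruct (walk (sext s) t2) as [[i2 j2] b2].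
case: E => e1 e2; apply: ord_inj; lia.
Qed.

Lemma det_main (bL bB : nat -> bool) (hbB : bB 1%N = false) x' m' k
  (om : nat -> nat -> bool * bool) :
  (m' < x'.+1 - k)%N -> yQ_le bL bB om x'.+1 m'.+1 ->
  exists s : {ffun 'I_(2 * x'.+1) -> bool}, (k <= #|[set t | s t]|)%N /\
     forall t, s t -> (om (Gpos s t).1 (Gpos s t).2).1 || (om (Gpos s t).1 (Gpos s t).2).2.
Proof.
move=> hm /existsP [[y hy] /= hq].
have hc := @crossing bL bB om hbB x'.+1 y.+1 isT isT hq.
set T := (x'.+1 + y.+1).-1 in hc.
have hw := walk_count (stay bL bB om) T.
rewrite -aw_walk hc /= in hw.
exists [ffun t : 'I_(2 * x'.+1) => stay bL bB om t]; split.
  rewrite card_sum.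
  have hT : (T <= 2 * x'.+1)%N by rewrite /T; lia.
  have hle : (\sum_(u < T) stay bL bB om u <= \sum_(u < 2 * x'.+1) stay bL bB om u)%N.
    rewrite (big_ord_widen (2 * x'.+1) (fun u => nat_of_bool (stay bL bB om u)) hT).
    rewrite big_mkcond /=; apply: leq_sum => u _; by case: ifP.
  rewrite (eq_bigr (fun u : 'I_(2 * x'.+1) => nat_of_bool (stay bL bB om u))); last first.
    by move=> u _; rewrite ffunE.
  pose S1 := (\sum_(u < T) stay bL bB om u)%N.
  pose S2 := (\sum_(u < 2 * x'.+1) stay bL bB om u)%N.
  change (is_true (x'.+1 < S1 + y.+1 + 1)%N) in hw.
  change (is_true (S1 <= S2)%N) in hle.
  change (is_true (k <= S2)%N).
  lia.
move=> t; rewrite ffunE => st; rewrite /Gpos.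
have -> : walk (sext [ffun t0 : 'I_(2 * x'.+1) => stay bL bB om t0]) t = aw bL bB om t.
  rewrite aw_walk; apply: walk_ext => u hu.
  have hu' : (u < 2 * x'.+1)%N by have := ltn_ord t; lia.
  by rewrite -[u]/(val (Ordinal hu')) sextE ffunE.
by have := @stay_bit bL bB om hbB t st; case: (aw bL bB om t) => [[i j] b].
Qed.


Local Open Scope ring_scope.

Lemma ext_omE X M (f : {ffun 'I_X.+1 * 'I_M.+1 -> bool * bool}) i j :
  ext_om f i j = if [&& (0 < i)%N, (i <= X.+1)%N, (0 < j)%N & (j <= M.+1)%N]
                 then f (inord i.-1, inord j.-1) else (false, false).
Proof.
rewrite /ext_om; case: i => [|i]; first by repeat (match goal with |- context [@insub ?a ?b ?c ?x] => destruct (@insub a b c x) end); rewrite /= ?andbF.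
case: j => [|j]; first by repeat (match goal with |- context [@insub ?a ?b ?c ?x] => destruct (@insub a b c x) end); rewrite /= ?andbF.
rewrite /= !ltnS.
case: (leqP i X) => hi; last first.
  by rewrite insubN //= ltnNge negbK.
case: (leqP j M) => hj; last first.
  have hi' : (i < X.+1)%N by [].
  by rewrite (insubT (fun x => x < X.+1)%N hi') insubN ?andbF //= ltnNge negbK.
have hi' : (i < X.+1)%N by [].
have hj' : (j < M.+1)%N by [].
rewrite (insubT (fun x => x < X.+1)%N hi') (insubT (fun x => x < M.+1)%N hj') /=.
by congr (f (_, _)); apply: val_inj; rewrite /= inordK.
Qed.

Section Prob.
Variables (R : realType) (d1 d2 : R).
Hypotheses (h1 : 0 <= d1 <= 1) (h2 : 0 <= d2 <= 1).

Definition wv (a : bool * bool) : R :=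
  (if a.1 then d1 else 1 - d1) * (if a.2 then d2 else 1 - d2).

Definition pp : R := d1 + d2 - d1 * d2.

Lemma wv_ge0 a : 0 <= wv a.
Proof.
move: h1 h2 => /andP[? ?] /andP[? ?].
by case: a => [[] []]; rewrite /wv /= mulr_ge0 //; lra.
Qed.

Lemma sum_good : \sum_(a | a.1 || a.2) wv a = pp.
Proof.
rewrite big_mkcond /=.
rewrite -(pair_big xpredT xpredT (fun a b => if a || b then wv (a, b) else 0)) /=.
rewrite !big_bool /wv /=; rewrite /pp; ring.
Qed.

Lemma sum_all : \sum_a wv a = 1.
Proof.
rewrite -(pair_big xpredT xpredT (fun a b => wv (a, b))) /=.
rewrite !big_bool /wv /=; ring.
Qed.

Lemma probV X M (V : {set 'I_X * 'I_M}) :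
  \sum_(f : {ffun 'I_X * 'I_M -> bool * bool} | [forall v in V, (f v).1 || (f v).2])
     box_weight d1 d2 f = pp ^+ #|V|.
Proof.
pose Q := fun (v : 'I_X * 'I_M) (a : bool * bool) => (v \notin V) || a.1 || a.2.
rewrite (eq_bigl (fun f => f \in family Q)); last first.
  move=> f; apply/forall_inP/familyP => H v.
    by rewrite /Q; case: (boolP (v \in V)) => //= /H.
  by move=> hv; have := H v; rewrite /Q hv.
have E := @bigA_distr_big_dep R 0 1 *%R +%R _ _ Q (fun v a => wv a).
transitivity (\prod_v \sum_(a | Q v a) wv a); first by rewrite E.
rewrite (eq_bigr (fun v => if v \in V then pp else 1)); last first.
  move=> v _; rewrite /Q; case: (v \in V) => /=; first exact: sum_good.
  exact: sum_all.
by rewrite -big_mkcond /= prodr_const.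
Qed.

Lemma bw_ge0 X M (f : {ffun 'I_X * 'I_M -> bool * bool}) : 0 <= box_weight d1 d2 f.
Proof. by apply: prodr_ge0 => v _; exact: (wv_ge0 (f v)). Qed.

Lemma pp_ge0 : 0 <= pp.
Proof. move: h1 h2 => /andP[? ?] /andP[? ?]; rewrite /pp; nra. Qed.

Definition good (a : bool * bool) := a.1 || a.2.

Lemma key X M N k (E : (nat -> nat -> bool * bool) -> bool)
  (G : {ffun 'I_N -> bool} -> 'I_N -> nat * nat)
  (Hinj : forall s t1 t2, G s t1 = G s t2 -> t1 = t2)
  (H : forall f : {ffun 'I_X.+1 * 'I_M.+1 -> bool * bool}, E (ext_om f) ->
     exists s : {ffun 'I_N -> bool}, (k <= #|[set t | s t]|)%N /\
       forall t, s t -> good (ext_om f (G s t).1 (G s t).2)) :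
  box_prob d1 d2 X.+1 M.+1 E <=
  \sum_(s : {ffun 'I_N -> bool} | (k <= #|[set t | s t]|)%N) pp ^+ #|[set t | s t]|.
Proof.
pose A (s : {ffun 'I_N -> bool}) (f : {ffun 'I_X.+1 * 'I_M.+1 -> bool * bool}) :=
  [forall t, s t ==> good (ext_om f (G s t).1 (G s t).2)].
rewrite /box_prob.
apply: (@le_trans _ _ (\sum_f \sum_(s : {ffun 'I_N -> bool} | (k <= #|[set t | s t]|)%N)
                     (if A s f then box_weight d1 d2 f else 0))).
  rewrite [X in X <= _]big_mkcond /=; apply: ler_sum => f _.
  case: ifP => hE; last by apply: sumr_ge0 => s _; case: ifP => // _; exact: bw_ge0.
  have [s0 [hk hA]] := H f hE.
  rewrite (bigD1 s0) //= (_ : A s0 f = true); last first.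
    by apply/forallP => t; apply/implyP; exact: hA t.
  rewrite lerDl; apply: sumr_ge0 => s _; case: ifP => // _; exact: bw_ge0.
rewrite exchange_big /=; apply: ler_sum => s hs.
rewrite -big_mkcond /=.
case: (pickP (fun f => A s f)) => [f0 hf0|none]; last first.
  by rewrite big_pred0 //; exact: exprn_ge0 pp_ge0.
pose h t := (inord (G s t).1.-1, inord (G s t).2.-1) : 'I_X.+1 * 'I_M.+1.
have inbox t : s t -> [&& (0 < (G s t).1)%N, ((G s t).1 <= X.+1)%N,
                          (0 < (G s t).2)%N & ((G s t).2 <= M.+1)%N].
  move=> st; move/forallP/(_ t): hf0; rewrite st /= ext_omE.
  by case: ifP.
have exth (f : {ffun 'I_X.+1 * 'I_M.+1 -> bool * bool}) t : s t ->
    ext_om f (G s t).1 (G s t).2 = f (h t).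
  by move=> st; rewrite ext_omE inbox.
have card : #|h @: [set t | s t]| = #|[set t | s t]|.
  apply: card_in_imset => t1 t2; rewrite !inE => s1 s2 /= [e1 e2].
  apply: (Hinj s).
  have := inbox _ s1; have := inbox _ s2.
  case: (G s t1) e1 e2 => a1 b1; case: (G s t2) => a2 b2 /= e1 e2.
  move=> /and4P[? ? ? ?] /and4P[? ? ? ?].
  have : (a1.-1 = a2.-1)%N.
    by rewrite -(@inordK X a1.-1) ?e1 ?inordK //; lia.
  have : (b1.-1 = b2.-1)%N.
    by rewrite -(@inordK M b1.-1) ?e2 ?inordK //; lia.
  move=> ? ?; congr (_, _); lia.
rewrite -card -(@probV X.+1 M.+1 (h @: [set t | s t])).
rewrite [X in X <= _]big_mkcond [X in _ <= X]big_mkcond /=.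
apply: ler_sum => f _; case: ifP => hA; last by case: ifP => // _; exact: bw_ge0.
rewrite (_ : [forall v in _, _] = true) //.
apply/forall_inP => v /imsetP [t]; rewrite inE => st ->.
by move/forallP/(_ t): hA; rewrite st /= exth.
Qed.

Lemma prod_if N (s : {ffun 'I_N -> bool}) (a : R) :
  \prod_t (if s t then a else 1) = a ^+ #|[set t | s t]|.
Proof.
rewrite -big_mkcond /= -prodr_const; apply: eq_bigl => t; by rewrite inE.
Qed.

Lemma tail_bound N k (lam : R) : 1 <= lam ->
  \sum_(s : {ffun 'I_N -> bool} | (k <= #|[set t | s t]|)%N) pp ^+ #|[set t | s t]|
  <= (lam ^+ k)^-1 * (1 + lam * pp) ^+ N.
Proof.
move=> hl; have l0 : 0 < lam by apply: lt_le_trans hl.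
have lk0 : 0 < lam ^+ k by apply: exprn_gt0.
apply: (@le_trans _ _ (\sum_(s : {ffun 'I_N -> bool}) (lam ^+ k)^-1 * (lam * pp) ^+ #|[set t | s t]|)).
  rewrite [X in _ <= X](bigID (fun s : {ffun 'I_N -> bool} => (k <= #|[set t | s t]|)%N)) /=.
  rewrite -[X in X <= _]addr0; apply: lerD; last first.
    apply: sumr_ge0 => s _; apply: mulr_ge0; first by rewrite invr_ge0 ltW.
    by apply: exprn_ge0; apply: mulr_ge0 => //; [exact: ltW | exact: pp_ge0].
  apply: ler_sum => s hs.
  set c := #|[set t | s t]| in hs *.
  have -> : (lam ^+ k)^-1 * (lam * pp) ^+ c = lam ^+ (c - k) * pp ^+ c.
    rewrite exprMn -{1}(subnK hs) exprD; field.
    by rewrite gt_eqF.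
  apply: ler_peMl; first by apply: exprn_ge0; exact: pp_ge0.
  exact: exprn_ege1.
rewrite -mulr_sumr ler_pM2l ?invr_gt0 //.
under eq_bigr => s _ do rewrite -prod_if.
have E := @bigA_distr_bigA R 0 1 *%R +%R _ bool (fun (t : 'I_N) (b : bool) => if b then lam * pp else 1).
rewrite /= in E; rewrite -E.
under eq_bigr => t _ do rewrite big_bool /=.
by rewrite prodr_const card_ord addrC.
Qed.

End Prob.


Theorem proposition5p8 (R : realType) (d1 d2 : R) :
  0 < d2 -> d2 < d1 -> d1 < 1 ->
  exists C c : R, 0 < C /\ 0 < c /\
    forall (bL bB : nat -> bool), bB 1%N = false ->
    forall x : nat, (10 < x)%N ->
    forall k : nat, 100 * x%:R * d1 <= k%:R ->
      prob_yQ_le d1 d2 bL bB x (x - k) <= C * expR (- (c * k%:R)).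
Proof.
move=> hd2 hd12 hd1.
have h1 : 0 <= d1 <= 1 by apply/andP; split; lra.
have h2 : 0 <= d2 <= 1 by apply/andP; split; lra.
exists 1, (1/4); split; first lra; split; first lra.
move=> bL bB hbB x hx k hk.
rewrite mul1r /prob_yQ_le.
case hm: (x - k)%N => [|m'].
  rewrite /box_prob big_pred0; first by rewrite expR_ge0.
  by move=> f; apply/existsP => -[[y hy]].
case: x hx hk hm => [|x'] // hx hk hm.
apply: le_trans.
  apply: (@key R d1 d2 h1 h2 x' m' (2 * x'.+1) k _ Gpos (@Gpos_inj _)).
  move=> f hf; apply: (@det_main bL bB hbB x' m' k (ext_om f)) => //.
  by rewrite hm.
pose lam : R := expR (1/2).
have lam1 : 1 <= lam by have := expR_ge1Dx (1/2 : R); rewrite /lam; lra.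
have lam2 : lam <= 2.
  have e1 := expR_ge1Dx (- (1/2) : R).
  have e2 : lam * expR (- (1/2)) = 1 by rewrite /lam -expRD subrr expR0.
  nra.
apply: le_trans (@tail_bound R d1 d2 h1 h2 _ k lam lam1) _.
set p := pp R d1 d2.
have p0 : 0 <= p by rewrite /p /pp; nra.
have p1 : p <= 2 * d1 by rewrite /p /pp; nra.
have lp : lam * p <= 4 * d1 by nra.
have -> : lam ^- k = expR (- (k%:R * (1/2))) by rewrite expRN expRM_natl.
apply: (@le_trans _ _ (expR (- (k%:R * (1/2))) * expR (lam * p) ^+ (2 * x'.+1))).
  apply: ler_wpM2l; first exact: expR_ge0.
  apply: lerXn2r; rewrite ?nnegrE ?expR_ge0 //; first by nra.
  exact: expR_ge1Dx.
rewrite -expRM_natl -expRD ler_expR.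
rewrite natrM.
set X := (x'.+1)%:R : R.
have X0 : 0 <= X by rewrite /X ler0n.
have k0 : 0 <= k%:R :> R by rewrite ler0n.
have : 2%:R * X * (lam * p) <= 2 * X * (4 * d1) by apply: ler_wpM2l => //; nra.
move: hk; rewrite -/X => hk.
nra.
Qed.
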